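(* Let $H$ be a separable complex Hilbert space, $\{v_j\}_{j\in\mathbb N}$ an orthonormal basis of $H$, $\{w_j\}_{j\in\mathbb N}$ a set of unit vectors in $H$, and $N\ge1$. Let $p_N'$ be the orthogonal projection onto $H_N'=\operatorname{span}\{v_1,\dots,v_N\}$, let $\tilde{\mathcal B}_N=\{p_N'(w_1),\dots,p_N'(w_N)\}\cup\{v_j\}_{j\ge N+1}$, and let $U_N'$ be the $N\times N$ matrix with entries $\langle p_N'(w_i),p_N'(w_j)\rangle$, $1\le i,j\le N$. Assume $\{p_N'(w_1),\dots,p_N'(w_N)\}$ is a basis of $H_N'$. Then $\tilde{\mathcal B}_N$ is a Riesz basis of $H$ with optimal frame constants $$\tilde B_N=\max_{\vec c\in\mathbb C^N,\ |\vec c|\le1}\big\{\langle U_N'\vec c,\vec c\rangle+1-|\vec c|^2\big\},\qquad \tilde A_N=\min_{\vec c\in\mathbb C^N,\ |\vec c|\le1}\big\{\langle U_N'\vec c,\vec c\rangle+1-|\vec c|^2\big\}.$$ Moreover, if $\Lambda_N$ and $\lambda_N$ denote the maximum and minimum eigenvalue of $U_N'$, then $\tilde B_N=\max\{\Lambda_N,1\}$ and $\tilde A_N=\lambda_N$.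
   Context: Here $|\vec c|$ is the Euclidean norm on $\mathbb C^N$. A Riesz basis is a sequence $\{u_j\}$ such that there are $0<A\le B<\infty$ with $A\|f\|^2\le\sum_j|\langle f,u_j\rangle|^2\le B\|f\|^2$ for all $f\in H$ and $A\sum|a_j|^2\le\|\sum a_ju_j\|^2\le B\sum|a_j|^2$ for all finite coefficient sequences; its optimal frame constants are the largest such $A$ and smallest such $B$. *)

(* Defs.v *)
From mathcomp Require Import all_boot all_algebra.
From mathcomp Require Import all_classical all_reals all_analysis.
From mathcomp Require Import complex.
Set Implicit Arguments. Unset Strict Implicit. Unset Printing Implicit Defensive.
Import GRing.Theory Num.Theory.
Local Open Scope ring_scope.

(* Complex scalars: C = R[i] for R : realType.  The complex order is the
   partial order of the numClosedField R[i]:  x <= y  iff  y - x is real >= 0. *)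

Section Hilbert.
Context {R : realType} {V : lmodType R[i]}.
Variable ip : V -> V -> R[i].  (* inner product, linear in the first argument *)

Definition hnorm (x : V) : R := Num.sqrt (complex.Re (ip x x)).

Definition inner_product_axioms : Prop :=
  [/\ (forall (a : R[i]) (x y z : V), ip (a *: x + y) z = a * ip x z + ip y z),
      (forall x y : V, ip y x = conjc (ip x y)),
      (forall x : V, 0 <= ip x x) &
      (forall x : V, ip x x = 0 -> x = 0)].

Definition hcomplete : Prop :=
  forall u : nat -> V,
    (forall e : R, 0 < e -> exists M : nat, forall m n : nat,
        (M <= m)%N -> (M <= n)%N -> hnorm (u m - u n) < e) ->
    exists l : V, forall e : R, 0 < e -> exists M : nat, forall n : nat,
        (M <= n)%N -> hnorm (u n - l) < e.

Definition hilbert_space : Prop := inner_product_axioms /\ hcomplete.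

Definition hseparable : Prop :=
  exists d : nat -> V, forall (x : V) (e : R), 0 < e ->
    exists n : nat, hnorm (x - d n) < e.

Definition orthonormal_basis (v : nat -> V) : Prop :=
  (forall i j : nat, ip (v i) (v j) = (i == j)%:R) /\
  (forall (x : V) (e : R), 0 < e -> exists (n : nat) (a : nat -> R[i]),
      hnorm (x - \sum_(j < n) a j *: v j) < e).

Definition span_first (N : nat) (v : nat -> V) (x : V) : Prop :=
  exists a : 'I_N -> R[i], x = \sum_(j < N) a j *: v j.

Definition orth_projection (S : V -> Prop) (P : V -> V) : Prop :=
  (forall x : V, S (P x)) /\
  (forall x y : V, S y -> ip (x - P x) y = 0).

Definition riesz_constants (u : nat -> V) (A B : R) : Prop :=
  [/\ 0 < A, A <= B,
      (forall f : V,
          ((A * hnorm f ^+ 2)%:E <=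
             \sum_(0 <= j <oo) ((ComplexField.Normc.normc (ip f (u j)) ^+ 2)%:E))%E /\
          (\sum_(0 <= j <oo) ((ComplexField.Normc.normc (ip f (u j)) ^+ 2)%:E) <=
             (B * hnorm f ^+ 2)%:E)%E) &
      (forall (n : nat) (a : nat -> R[i]),
          A * (\sum_(j < n) ComplexField.Normc.normc (a j) ^+ 2)
            <= hnorm (\sum_(j < n) a j *: u j) ^+ 2 /\
          hnorm (\sum_(j < n) a j *: u j) ^+ 2
            <= B * (\sum_(j < n) ComplexField.Normc.normc (a j) ^+ 2))].

Definition riesz_basis (u : nat -> V) : Prop :=
  exists A B : R, riesz_constants u A B.

Definition optimal_riesz_constants (u : nat -> V) (A B : R) : Prop :=
  riesz_constants u A B /\
  (forall A' B' : R, riesz_constants u A' B' -> A' <= A /\ B <= B').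

End Hilbert.

Section Cn.
Context {R : realType} {N : nat}.

Definition cvnorm (c : 'cV[R[i]]_N) : R :=
  Num.sqrt (\sum_(i < N) ComplexField.Normc.normc (c i ord0) ^+ 2).

Definition mx_form (U : 'M[R[i]]_N) (c : 'cV[R[i]]_N) : R[i] :=
  \sum_(i < N) (U *m c) i ord0 * conjc (c i ord0).

Definition Bfun (U : 'M[R[i]]_N) (c : 'cV[R[i]]_N) : R[i] :=
  mx_form U c + 1 - ((cvnorm c ^+ 2)%:C)%C.

Definition is_max_on_ball (U : 'M[R[i]]_N) (M : R) : Prop :=
  (exists2 c, cvnorm c <= 1 & Bfun U c = (M%:C)%C) /\
  (forall c, cvnorm c <= 1 -> Bfun U c <= (M%:C)%C).

Definition is_min_on_ball (U : 'M[R[i]]_N) (m : R) : Prop :=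
  (exists2 c, cvnorm c <= 1 & Bfun U c = (m%:C)%C) /\
  (forall c, cvnorm c <= 1 -> (m%:C)%C <= Bfun U c).

Definition is_max_eigenvalue (U : 'M[R[i]]_N) (L : R) : Prop :=
  eigenvalue U (L%:C)%C /\ (forall a, eigenvalue U a -> a <= (L%:C)%C).

Definition is_min_eigenvalue (U : 'M[R[i]]_N) (l : R) : Prop :=
  eigenvalue U (l%:C)%C /\ (forall a, eigenvalue U a -> (l%:C)%C <= a).

End Cn.

(* Submission.v *)
Require Import Defs.
From mathcomp Require Import all_boot all_algebra.
From mathcomp Require Import all_classical all_reals all_analysis.
From mathcomp Require Import complex.
From mathcomp Require Import ring lra.
Import GRing.Theory Num.Theory.
Local Open Scope ring_scope.
Module Aux.
Import order.Order.TTheory.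
Set Implicit Arguments. Unset Strict Implicit. Unset Printing Implicit Defensive.
Lemma series_bounds (R : realType) (u : nat -> R) (L : R) :
  (forall j, 0 <= u j) ->
  (forall n, \sum_(0 <= j < n) u j <= L) ->
  (forall e, 0 < e -> exists n, L - e <= \sum_(0 <= j < n) u j) ->
  (\sum_(0 <= j <oo) (u j)%:E = L%:E)%E.
Proof.
move=> u0 ub lb; apply/eqP; rewrite eq_le; apply/andP; split.
  apply: lime_le; first by apply: is_cvg_nneseries => n _ _; rewrite lee_fin.
  apply: nearW => n /=; rewrite sumEFin lee_fin; exact: ub.
apply/lee_addgt0Pr => e e0; have [n hn] := lb e e0.
apply: (@le_trans _ _ ((\sum_(0 <= j < n) u j)%:E + e%:E)%E).
  by rewrite -EFinD lee_fin -lerBlDr.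
rewrite leeD2r // -sumEFin.
by apply: nneseries_lim_ge => k _ _; rewrite lee_fin.
Qed.

Section IP.
Variables (R : realType) (V : lmodType R[i]) (ip : V -> V -> R[i]).
Hypothesis ipA : inner_product_axioms ip.
Local Notation C := (R[i]).

Lemma ipC x y : ip y x = (ip x y)^*.
Proof. by case: ipA => _ h _ _; rewrite h. Qed.

Lemma ip0l z : ip 0 z = 0.
Proof.
case: ipA => h _ _ _; have := h 1 0 0 z; rewrite scaler0 addr0 mul1r.
by move=> h'; apply: (addrI (ip 0 z)); rewrite addr0 -h'.
Qed.

Lemma ipDl x y z : ip (x + y) z = ip x z + ip y z.
Proof. by case: ipA => h _ _ _; rewrite -[x]scale1r h mul1r scale1r. Qed.

Lemma ipZl a x z : ip (a *: x) z = a * ip x z.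
Proof. by case: ipA => h _ _ _; rewrite -[_ *: x]addr0 h ip0l addr0. Qed.

Lemma ipNl x z : ip (- x) z = - ip x z.
Proof. by rewrite -scaleN1r ipZl mulN1r. Qed.

Lemma ipBl x y z : ip (x - y) z = ip x z - ip y z.
Proof. by rewrite ipDl ipNl. Qed.

Lemma ip0r z : ip z 0 = 0.
Proof. by rewrite ipC ip0l conjC0. Qed.

Lemma ipDr x y z : ip z (x + y) = ip z x + ip z y.
Proof. by rewrite ipC ipDl rmorphD (ipC x z) (ipC y z). Qed.

Lemma ipZr a x z : ip z (a *: x) = a^* * ip z x.
Proof. by rewrite ipC ipZl rmorphM (ipC x z). Qed.

Lemma ipBr x y z : ip z (x - y) = ip z x - ip z y.
Proof. by rewrite ipC ipBl rmorphB (ipC x z) (ipC y z). Qed.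

Lemma ip_suml I (r : seq I) (P : pred I) (F : I -> V) z :
  ip (\sum_(i <- r | P i) F i) z = \sum_(i <- r | P i) ip (F i) z.
Proof. exact: (big_morph (fun x => ip x z) (fun x y => ipDl x y z) (ip0l z)). Qed.

Lemma ip_sumr I (r : seq I) (P : pred I) (F : I -> V) z :
  ip z (\sum_(i <- r | P i) F i) = \sum_(i <- r | P i) ip z (F i).
Proof. exact: (big_morph (fun x => ip z x) (fun x y => ipDr x y z) (ip0r z)). Qed.

Lemma ip_ge0 x : 0 <= ip x x.
Proof. by case: ipA. Qed.

Lemma ip_real x : ((complex.Re (ip x x))%:C)%C = ip x x.
Proof.
have := ip_ge0 x; case: (ip x x) => a b /=.
by rewrite lecE /= => /andP[/eqP -> _].
Qed.

Lemma hnorm2 x : hnorm ip x ^+ 2 = complex.Re (ip x x).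
Proof.
rewrite /hnorm sqr_sqrtr //.
by have := ip_ge0 x; rewrite -ip_real lecR.
Qed.

Lemma hnorm2C x : ((hnorm ip x ^+ 2)%:C)%C = ip x x.
Proof. by rewrite hnorm2 ip_real. Qed.

Lemma ip_eq0 x : ip x x = 0 -> x = 0.
Proof. by case: ipA => _ _ _ h; apply: h. Qed.

End IP.

Section SpecAll.
Local Open Scope sesquilinear_scope.
Lemma lerCM (R : realType) (a b c : R[i]) : a <= b -> 0 <= c -> a * c <= b * c.
Proof. by move=> h1 h2; rewrite -subr_ge0 -mulrBl mulr_ge0 // subr_ge0. Qed.

Lemma lerRM (R : realType) (a b c : R) : a <= b -> 0 <= c -> a * c <= b * c.
Proof. by move=> h1 h2; rewrite -subr_ge0 -mulrBl mulr_ge0 // subr_ge0. Qed.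

Section Spec.
Variables (R : realType) (N : nat) (U : 'M[R[i]]_N).
Local Notation C := (R[i]).
Hypothesis N0 : (0 < N)%N.
Hypothesis Uh : U ^t* = U.
Hypothesis Upos : forall c : 'cV[C]_N, c != 0 -> 0 < (c^t* *m U *m c) 0 0.

Definition nc (c : 'cV[C]_N) := (c^t* *m c) 0 0.
Definition qf (c : 'cV[C]_N) := (c^t* *m U *m c) 0 0.

Lemma nc_sum c : nc c = \sum_k c k 0 * (c k 0)^*.
Proof. by rewrite /nc mxE; apply: eq_bigr => k _; rewrite !mxE mulrC. Qed.

Lemma nc_ge0 c : 0 <= nc c.
Proof. by rewrite nc_sum; apply: sumr_ge0 => k _; apply: mul_conjC_ge0. Qed.

Lemma nc_gt0 c : c != 0 -> 0 < nc c.
Proof.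
move=> c0; rewrite lt_def nc_ge0 andbT; apply: contra c0; rewrite nc_sum => /eqP h.
apply/eqP; apply/matrixP => k j; rewrite ord1 mxE.
have hk : c k 0 * (c k 0)^* = 0.
  by apply: (psumr_eq0P _ h) => // i _; apply: mul_conjC_ge0.
by move/eqP: hk; rewrite mul_conjC_eq0 => /eqP.
Qed.

Let W := spectralmx U.
Let d := spectral_diag U.

Lemma Unormal : U \is normalmx.
Proof. by apply/normalmxP; rewrite Uh. Qed.

Lemma Wu : W \is unitarymx.
Proof. exact: spectral_unitarymx. Qed.

Lemma WWt : W *m W^t* = 1%:M.
Proof. exact/unitarymxP/Wu. Qed.

Lemma WtW : W^t* *m W = 1%:M.
Proof. by rewrite -invmx_unitary ?Wu // mulVmx // unitarymx_unit // Wu. Qed.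

Lemma UE : U = W^t* *m diag_mx d *m W.
Proof.
by rewrite -invmx_unitary ?Wu //; apply/orthomx_spectralP/Unormal.
Qed.


Lemma ctM m n p (A : 'M[C]_(m, n)) (B : 'M[C]_(n, p)) : (A *m B)^t* = B^t* *m A^t*.
Proof. by rewrite trmx_mul map_mxM. Qed.

Lemma diag_form (z : 'cV[C]_N) (e : 'rV[C]_N) :
  (z^t* *m diag_mx e *m z) 0 0 = \sum_k e 0 k * (z k 0 * (z k 0)^*).
Proof.
rewrite mul_mx_diag mxE; apply: eq_bigr => k _; rewrite !mxE.
by rewrite [_ * e 0 k]mulrC -mulrA [(z k 0)^* * _]mulrC.
Qed.

Lemma qfE c : qf c = \sum_k d 0 k * ((W *m c) k 0 * ((W *m c) k 0)^*).
Proof.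
by rewrite -(diag_form (W *m c) d) /qf [in LHS]UE ctM !mulmxA.
Qed.

Lemma ncW c : nc (W *m c) = nc c.
Proof. by rewrite /nc ctM -mulmxA (mulmxA (W^t*)) WtW mul1mx. Qed.

Lemma ncWt y : nc (W^t* *m y) = nc y.
Proof. by rewrite /nc ctM trmxCK -mulmxA (mulmxA W) WWt mul1mx. Qed.

Lemma ncU c : nc (U *m c) = \sum_k (d 0 k * (d 0 k)^*) * ((W *m c) k 0 * ((W *m c) k 0)^*).
Proof.
have -> : U *m c = W^t* *m (diag_mx d *m (W *m c)) by rewrite UE !mulmxA.
rewrite ncWt nc_sum; apply: eq_bigr => k _; rewrite mul_diag_mx !mxE rmorphM.
by rewrite mulrACA.
Qed.

Lemma conjR (x : R) : ((x%:C)%C)^* = (x%:C)%C :> C.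
Proof. exact: conjc_real. Qed.

Definition ek (k : 'I_N) : 'cV[C]_N := delta_mx k 0.

Lemma ek_sum (k : 'I_N) (F : 'I_N -> C -> C) : (forall j, F j 0 = 0) ->
  \sum_j F j (ek k j 0) = F k 1.
Proof.
move=> F0; rewrite (bigD1 k) //= big1 ?addr0; first by rewrite mxE !eqxx.
by move=> j jk; rewrite mxE (negbTE jk) /= F0.
Qed.

Lemma W_ck k : W *m (W^t* *m ek k) = ek k.
Proof. by rewrite mulmxA WWt mul1mx. Qed.

Lemma ck_neq0 k : W^t* *m ek k != 0.
Proof.
apply/negP => /eqP h; have := W_ck k; rewrite h mulmx0 => /matrixP/(_ k 0).
by rewrite !mxE !eqxx /= => /eqP; rewrite eq_sym oner_eq0.
Qed.

Lemma qf_ck k : qf (W^t* *m ek k) = d 0 k.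
Proof.
rewrite qfE W_ck (@ek_sum k (fun j x => d 0 j * (x * x^*))).
  by rewrite conjC1 !mulr1.
by move=> j; rewrite mul0r mulr0.
Qed.

Lemma nc_ck k : nc (W^t* *m ek k) = 1.
Proof.
rewrite -ncW W_ck nc_sum (@ek_sum k (fun j x => x * x^*)) ?conjC1 ?mulr1 //.
by move=> j; rewrite mul0r.
Qed.

Lemma d_gt0 k : 0 < d 0 k.
Proof. by rewrite -qf_ck; apply: Upos; apply: ck_neq0. Qed.

Definition delta k := complex.Re (d 0 k).

Lemma dE k : d 0 k = ((delta k)%:C)%C.
Proof.
have := ger0_Im (ltW (d_gt0 k)); rewrite /delta.
by case: (d 0 k) => a b /= ->.
Qed.

Lemma delta_gt0 k : 0 < delta k.
Proof. by have := d_gt0 k; rewrite dE ltcR. Qed.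

Lemma eigen_d k : eigenvalue U (d 0 k).
Proof.
apply/eigenvalueP; exists (delta_mx 0 k *m W).
  rewrite {1}UE !mulmxA -(mulmxA _ W) WWt mulmx1 scalemxAl; congr (_ *m W).
  apply/matrixP => i j; rewrite mul_mx_diag !mxE.
  by rewrite ord1 eqxx /=; case: eqP => [->|_]; rewrite ?mulr0 ?mul0r // mulrC.
rewrite mulmx_free_eq0 ?row_free_unit ?unitarymx_unit ?Wu //.
by apply/negP => /eqP/matrixP/(_ 0 k); rewrite !mxE !eqxx => /eqP; rewrite oner_eq0.
Qed.

Lemma eigen_qf a : eigenvalue U a -> exists2 c, c != 0 & qf c = a * nc c.
Proof.
move/eigenvalueP => [x xU x0]; exists (x^t*).
  apply: contra x0 => /eqP h; apply/eqP; rewrite -[x]trmxCK h.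
  by apply/matrixP => i j; rewrite !mxE conjC0.
by rewrite /qf /nc trmxCK xU -scalemxAl mxE.
Qed.

End Spec.

Section Spec2.
Variables (R : realType) (N : nat) (U : 'M[R[i]]_N).
Local Notation C := (R[i]).
Hypothesis N0 : (0 < N)%N.
Hypothesis Uh : U ^t* = U.
Hypothesis Upos : forall c : 'cV[C]_N, c != 0 -> 0 < (c^t* *m U *m c) 0 0.

Lemma spectral_summary : exists lam Lam : R,
  0 < lam /\ lam <= Lam /\
  (forall c, (lam%:C)%C * nc c <= qf U c /\ qf U c <= (Lam%:C)%C * nc c) /\
  (forall c, (lam%:C)%C * qf U c <= nc (U *m c) /\ nc (U *m c) <= (Lam%:C)%C * qf U c) /\
  (exists c, nc c = 1 /\ qf U c = (lam%:C)%C) /\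
  (exists c, nc c = 1 /\ qf U c = (Lam%:C)%C) /\
  eigenvalue U (lam%:C)%C /\ eigenvalue U (Lam%:C)%C /\
  (forall a, eigenvalue U a -> (lam%:C)%C <= a /\ a <= (Lam%:C)%C).
Proof.
set k0 := Ordinal N0.
have [kmin _ hmin] := @arg_minP _ R _ k0 xpredT (delta U) isT.
have [kmax _ hmax] := @arg_maxP _ R _ k0 xpredT (delta U) isT.
set lam := delta U kmin; set Lam := delta U kmax.
set W := spectralmx U.
have lamd k : (lam%:C)%C <= spectral_diag U 0 k.
  by rewrite (dE Uh Upos) lecR; apply: hmin.
have Lamd k : spectral_diag U 0 k <= (Lam%:C)%C.
  by rewrite (dE Uh Upos) lecR; apply: hmax.
have B1 c : (lam%:C)%C * nc c <= qf U c /\ qf U c <= (Lam%:C)%C * nc c.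
  rewrite (qfE Uh) -(ncW U c) nc_sum !mulr_sumr; split; apply: ler_sum => k _.
    exact: (lerCM (lamd k) (mul_conjC_ge0 _)).
  exact: (lerCM (Lamd k) (mul_conjC_ge0 _)).
have B2 c : (lam%:C)%C * qf U c <= nc (U *m c) /\ nc (U *m c) <= (Lam%:C)%C * qf U c.
  rewrite (qfE Uh) (ncU Uh) !mulr_sumr; split; apply: ler_sum => k _.
    rewrite mulrA; have hk : (lam%:C)%C * spectral_diag U 0 k <= spectral_diag U 0 k * (spectral_diag U 0 k)^*.
      rewrite (dE Uh Upos) conjR -!rmorphM lecR.
      exact: (lerRM (hmin k isT) (ltW (delta_gt0 Uh Upos k))).
    exact: (lerCM hk (mul_conjC_ge0 _)).
  have hk : spectral_diag U 0 k * (spectral_diag U 0 k)^* <= (Lam%:C)%C * spectral_diag U 0 k.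
    rewrite (dE Uh Upos) conjR -!rmorphM lecR.
    exact: (lerRM (hmax k isT) (ltW (delta_gt0 Uh Upos k))).
  rewrite [in X in _ <= X]mulrA; exact: (lerCM hk (mul_conjC_ge0 _)).
exists lam, Lam; split; first exact: delta_gt0.
split; first exact: hmin.
split; first exact: B1.
split; first exact: B2.
split.
  by exists (W^t* *m ek R kmin); rewrite (nc_ck U) (qf_ck Uh) (dE Uh Upos).
split.
  by exists (W^t* *m ek R kmax); rewrite (nc_ck U) (qf_ck Uh) (dE Uh Upos).
split; first by rewrite /lam -(dE Uh Upos); apply: eigen_d.
split; first by rewrite /Lam -(dE Uh Upos); apply: eigen_d.
move=> a /eigen_qf [c c0 qc]; have [h1 h2] := B1 c.
have n0 := nc_gt0 c0.
by rewrite qc !(ler_pM2r n0) in h1 h2; split.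
Qed.

End Spec2.


End SpecAll.
Lemma normc2C (R : realType) (z : R[i]) :
  ((ComplexField.Normc.normc z ^+ 2)%:C)%C = z * z^*.
Proof. rewrite rmorphXn /=; exact: normCK. Qed.

Lemma trunc_sum (M : nmodType) (F : nat -> M) (n N : nat) :
  \sum_(j < n) (if (j < N)%N then F j else 0) =
  \sum_(i < N) (if (i < n)%N then F i else 0).
Proof.
rewrite (@big_ord_widen _ _ _ n (n + N) (fun j => if (j < N)%N then F j else 0)) ?leq_addr // big_mkcond.
rewrite [RHS](@big_ord_widen _ _ _ N (n + N) (fun j => if (j < n)%N then F j else 0)) ?leq_addl // [RHS]big_mkcond.
by apply: eq_bigr => j _; case: (j < n)%N; case: (j < N)%N.
Qed.

Section Hil.
Variables (R : realType) (V : lmodType R[i]) (ip : V -> V -> R[i]).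
Hypothesis ipA : inner_product_axioms ip.
Variable v : nat -> V.
Hypothesis vON : forall i j : nat, ip (v i) (v j) = (i == j)%:R.

Lemma ip_sum_v (a : nat -> R[i]) n k :
  ip (\sum_(j < n) a j *: v j) (v k) = if (k < n)%N then a k else 0.
Proof.
elim: n => [|n IH]; first by rewrite big_ord0 (ip0l ipA).
rewrite big_ord_recr /= (ipDl ipA) IH (ipZl ipA) vON.
case: (ltngtP k n) => [kn|nk|->].
- by rewrite ltnS (ltnW kn) mulr0 addr0.
- by rewrite ltnS leqNgt nk /= mulr0 addr0.
- by rewrite ltnSn mulr1 add0r.
Qed.

Lemma ip_v_sum (a : nat -> R[i]) n k :
  ip (v k) (\sum_(j < n) a j *: v j) = if (k < n)%N then (a k)^* else 0.
Proof. by rewrite (ipC ipA) ip_sum_v; case: ifP => _; rewrite ?conjC0. Qed.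

Lemma ip_sum_sum (a : nat -> R[i]) n :
  ip (\sum_(j < n) a j *: v j) (\sum_(j < n) a j *: v j) = \sum_(j < n) a j * (a j)^*.
Proof.
rewrite (ip_suml ipA); apply: eq_bigr => j _; rewrite (ipZl ipA) ip_v_sum ltn_ord.
by [].
Qed.

Lemma parseval_id h (a : nat -> R[i]) n :
  ip (h - \sum_(j < n) a j *: v j) (h - \sum_(j < n) a j *: v j) = ip h h +
    \sum_(j < n) ((a j - ip h (v j)) * (a j - ip h (v j))^* - ip h (v j) * (ip h (v j))^*).
Proof.
set s := \sum_(j < n) a j *: v j; rewrite (ipBl ipA) !(ipBr ipA).
have -> : ip h s = \sum_(j < n) (a j)^* * ip h (v j).
  by rewrite (ip_sumr ipA); apply: eq_bigr => j _; rewrite (ipZr ipA).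
have -> : ip s h = \sum_(j < n) a j * (ip h (v j))^*.
  by rewrite (ip_suml ipA); apply: eq_bigr => j _; rewrite (ipZl ipA) (ipC ipA h).
rewrite ip_sum_sum -addrA; congr (_ + _).
rewrite -sumrB -sumrN -sumrB; apply: eq_bigr => j _.
rewrite rmorphB /=; ring.
Qed.

Local Notation normc := (@ComplexField.Normc.normc R).

Lemma sum_normc2C (I : Type) (r : seq I) (P : pred I) (F : I -> R[i]) :
  ((\sum_(i <- r | P i) normc (F i) ^+ 2)%:C)%C = \sum_(i <- r | P i) F i * (F i)^*.
Proof. by rewrite rmorph_sum; apply: eq_bigr => i _; exact: normc2C. Qed.

Lemma bessel h n : \sum_(j < n) normc (ip h (v j)) ^+ 2 <= hnorm ip h ^+ 2.
Proof.
rewrite -lecR sum_normc2C (hnorm2C ipA).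
have := ip_ge0 ipA (h - \sum_(j < n) ip h (v j) *: v j).
rewrite (parseval_id h (fun j => ip h (v j))).
under eq_bigr do rewrite subrr mul0r sub0r.
by rewrite sumrN subr_ge0.
Qed.

Lemma parseval_lb h (a : nat -> R[i]) n :
  hnorm ip h ^+ 2 - \sum_(j < n) normc (ip h (v j)) ^+ 2 <=
  hnorm ip (h - \sum_(j < n) a j *: v j) ^+ 2.
Proof.
rewrite -lecR rmorphB /= sum_normc2C !(hnorm2C ipA) parseval_id sumrB addrA.
rewrite lerD2r lerDl; apply: sumr_ge0 => j _; exact: mul_conjC_ge0.
Qed.

Lemma parseval_approx h :
  (forall (e : R), 0 < e -> exists (n : nat) (a : nat -> R[i]),
      hnorm ip (h - \sum_(j < n) a j *: v j) < e) ->
  forall e : R, 0 < e -> exists n, hnorm ip h ^+ 2 - e <= \sum_(j < n) normc (ip h (v j)) ^+ 2.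
Proof.
move=> tot e e0; have [n [a ha]] := tot (Num.sqrt e) (etrans (sqrtr_gt0 e) e0).
exists n; rewrite lerBlDr addrC -lerBlDr.
apply: (le_trans (parseval_lb h a n)); apply: ltW.
by move: ha; rewrite {1}/hnorm ltr_sqrt // (hnorm2 ipA).
Qed.

End Hil.

End Aux.
Module GramM.
Import Aux.
Import order.Order.TTheory.
Set Implicit Arguments. Unset Strict Implicit. Unset Printing Implicit Defensive.
Section Gram.
Local Open Scope sesquilinear_scope.
Variables (R : realType) (V : lmodType R[i]) (ip : V -> V -> R[i]).
Hypothesis ipA : inner_product_axioms ip.
Variables (N : nat) (g : 'I_N -> V).
Let U : 'M[R[i]]_N := \matrix_(i, j) ip (g i) (g j).

Lemma gram_herm : U^t* = U.
Proof. by apply/matrixP => i j; rewrite !mxE -(ipC ipA). Qed.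

Lemma gram_qf (c : 'cV[R[i]]_N) :
  qf U c = ip (\sum_k (c k 0)^* *: g k) (\sum_k (c k 0)^* *: g k).
Proof.
rewrite /qf mxE (ip_suml ipA).
under eq_bigr => j _ do rewrite mxE big_distrl /=.
rewrite exchange_big /=; apply: eq_bigr => i _.
rewrite (ipZl ipA) (ip_sumr ipA) mulr_sumr; apply: eq_bigr => j _.
rewrite (ipZr ipA) conjCK !mxE; ring.
Qed.

Lemma gram_nc (b : 'I_N -> R[i]) :
  nc (U *m \col_k (b k)^*) =
  \sum_i ip (\sum_k b k *: g k) (g i) * (ip (\sum_k b k *: g k) (g i))^*.
Proof.
rewrite nc_sum; apply: eq_bigr => i _.
have -> : (U *m \col_k (b k)^*) i 0 = (ip (\sum_k b k *: g k) (g i))^*.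
  rewrite mxE -(ipC ipA _ (g i)) (ip_sumr ipA); apply: eq_bigr => k _.
  by rewrite !mxE (ipZr ipA) mulrC.
by rewrite conjCK mulrC.
Qed.

Lemma gram_pos :
  (forall a : 'I_N -> R[i], \sum_(i < N) a i *: g i = 0 -> forall i, a i = 0) ->
  forall c : 'cV[R[i]]_N, c != 0 -> 0 < (c^t* *m U *m c) 0 0.
Proof.
move=> indep c c0; have := gram_qf c; rewrite /qf => ->.
rewrite lt_def (ip_ge0 ipA) andbT; apply/negP => /eqP /(ip_eq0 ipA) h.
suff c_eq : c = 0 by rewrite c_eq eqxx in c0.
apply/matrixP => k j; rewrite ord1 mxE.
by have /eqP := indep _ h k; rewrite conjC_eq0 => /eqP.
Qed.

Lemma gram_qfb (b : 'I_N -> R[i]) :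
  qf U (\col_k (b k)^*) = ip (\sum_k b k *: g k) (\sum_k b k *: g k).
Proof.
rewrite gram_qf; congr (ip _ _); apply: eq_bigr => k _; by rewrite mxE conjCK.
Qed.

Lemma nc_col (b : 'I_N -> R[i]) : nc (\col_k (b k)^* : 'cV[R[i]]_N) = \sum_k b k * (b k)^*.
Proof. by rewrite nc_sum; apply: eq_bigr => k _; rewrite mxE conjCK mulrC. Qed.

Lemma gram_summary : (0 < N)%N ->
  (forall a : 'I_N -> R[i], \sum_(i < N) a i *: g i = 0 -> forall i, a i = 0) ->
  exists lam Lam : R,
  0 < lam /\ lam <= Lam /\
  (forall c, (lam%:C)%C * nc c <= qf U c /\ qf U c <= (Lam%:C)%C * nc c) /\
  (forall c, (lam%:C)%C * qf U c <= nc (U *m c) /\ nc (U *m c) <= (Lam%:C)%C * qf U c) /\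
  (exists c, nc c = 1 /\ qf U c = (lam%:C)%C) /\
  (exists c, nc c = 1 /\ qf U c = (Lam%:C)%C) /\
  eigenvalue U (lam%:C)%C /\ eigenvalue U (Lam%:C)%C /\
  (forall a, eigenvalue U a -> (lam%:C)%C <= a /\ a <= (Lam%:C)%C).
Proof.
move=> N0 indep; exact: (spectral_summary N0 gram_herm (gram_pos indep)).
Qed.

End Gram.

Lemma mx_formE (R : realType) (N : nat) (U : 'M[R[i]]_N) c : mx_form U c = qf U c.
Proof.
rewrite /mx_form /qf -mulmxA mxE; apply: eq_bigr => i _; rewrite !mxE mulrC.
by [].
Qed.

Lemma cvnormE (R : realType) (N : nat) (c : 'cV[R[i]]_N) :
  ((cvnorm c ^+ 2)%:C)%C = nc c.
Proof.
rewrite /cvnorm sqr_sqrtr; last by apply: sumr_ge0 => i _; apply: sqr_ge0.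
by rewrite sum_normc2C nc_sum.
Qed.

End GramM.
Module Main.
Import Aux GramM order.Order.TTheory.
Set Implicit Arguments. Unset Strict Implicit.
Local Notation normc := (@ComplexField.Normc.normc _).

Lemma fin1 (R : realFieldType) (lam Y hh A : R) :
  lam <= 1 -> 0 <= hh -> lam * Y <= A -> lam * (Y + hh) <= A + hh.
Proof. move=> *; nra. Qed.

Lemma fin2 (R : realFieldType) (Lam M Y hh A : R) :
  1 <= M -> Lam <= M -> 0 <= Y -> 0 <= hh -> A <= Lam * Y -> A + hh <= M * (Y + hh).
Proof. move=> *; nra. Qed.

Lemma fin3 (R : realFieldType) (A hh e s1 s2 : R) :
  hh - e <= s1 -> s1 <= s2 -> A + hh - e <= A + s2.
Proof. move=> *; lra. Qed.

Lemma fin4 (R : realFieldType) (Lam M Y cv : R) :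
  Y <= Lam * cv -> 0 <= cv -> cv <= 1 -> Lam <= M -> 1 <= M -> Y + 1 - cv <= M.
Proof. move=> *; nra. Qed.

Lemma fin5 (R : realFieldType) (lam Y cv : R) :
  lam * cv <= Y -> 0 <= cv -> cv <= 1 -> lam <= 1 -> lam <= Y + 1 - cv.
Proof. move=> *; nra. Qed.

Lemma pyth (R : realType) (V : lmodType R[i]) (ip : V -> V -> R[i]) (ipA : inner_product_axioms ip)
  (S : V -> Prop) (p : V -> V) : orth_projection ip S p ->
  forall f, ip f f = ip (p f) (p f) + ip (f - p f) (f - p f).
Proof.
move=> [pS pO] f; set h := f - p f.
have hp : ip h (p f) = 0 by apply: pO.
have ph : ip (p f) h = 0 by rewrite (ipC ipA) hp conjC0.
have fE : f = p f + h by rewrite /h addrC subrK.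
clearbody h; rewrite {1 2}fE (ipDl ipA) !(ipDr ipA) hp ph.
by rewrite add0r addr0.
Qed.

Lemma hnorm_pyth (R : realType) (V : lmodType R[i]) (ip : V -> V -> R[i]) (ipA : inner_product_axioms ip)
  (S : V -> Prop) (p : V -> V) : orth_projection ip S p ->
  forall f, hnorm ip f ^+ 2 = hnorm ip (p f) ^+ 2 + hnorm ip (f - p f) ^+ 2.
Proof.
move=> hp f; have := pyth ipA hp f; rewrite -!(hnorm2C ipA) -rmorphD.
by case.
Qed.


End Main.

Import Aux GramM Main order.Order.TTheory.
Unset Implicit Arguments.
Local Notation normc := (@ComplexField.Normc.normc _).

Theorem mainTheorem5 (R : realType) (V : lmodType R[i]) (ip : V -> V -> R[i])
  (v w : nat -> V) (N : nat) (p : V -> V) :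
  hilbert_space ip -> hseparable ip ->
  orthonormal_basis ip v ->
  (forall j : nat, hnorm ip (w j) = 1) ->
  (1 <= N)%N ->
  orth_projection ip (span_first N v) p ->
  (* {p(w_1), ..., p(w_N)} is a basis of H_N' *)
  (forall a : 'I_N -> R[i], \sum_(i < N) a i *: p (w i) = 0 -> forall i, a i = 0) ->
  (forall x : V, span_first N v x ->
     exists a : 'I_N -> R[i], x = \sum_(i < N) a i *: p (w i)) ->
  let Bt : nat -> V := fun j => if (j < N)%N then p (w j) else v j in
  let U : 'M[R[i]]_N := \matrix_(i < N, j < N) ip (p (w i)) (p (w j)) in
  riesz_basis ip Bt /\
  exists Btilde Atilde : R,
    [/\ optimal_riesz_constants ip Bt Atilde Btilde,
        is_max_on_ball U Btilde,
        is_min_on_ball U Atilde &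
        forall Lam lam : R, is_max_eigenvalue U Lam -> is_min_eigenvalue U lam ->
          Btilde = Num.max Lam 1 /\ Atilde = lam].
Proof.
move=> [ipA _] _ [vON vtot] wn N1 hP indep spanH Bt U.
have [pS pO] := hP.
pose g : 'I_N -> V := fun i => p (w i).
have [lam [Lam [lam0 [lamLam [B1 [B2 [[c1 [c1n c1q]] [[c2 [c2n c2q]] [eigl [eigL eigB]]]]]]]]]]
  := gram_summary ipA (g := g) N1 indep.
rewrite -/U in B1 B2 c1q c2q eigl eigL eigB.
set M := Num.max Lam 1.
have span_ortho : forall y j, span_first N v y -> (N <= j)%N -> ip y (v j) = 0.
  move=> y j [a ->] Nj; rewrite (ip_suml ipA) big1 // => k _.
  by rewrite (ipZl ipA) vON ltn_eqF ?mulr0 // (leq_trans (ltn_ord k) Nj).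
have vS : forall j, (j < N)%N -> span_first N v (v j).
  move=> j jN; exists (fun k => ((k : nat) == j)%:R).
  rewrite (bigD1 (Ordinal jN)) //= eqxx scale1r big1 ?addr0 // => k kj.
  case: eqP => [h|_]; last by rewrite scale0r.
  by move: kj; rewrite -val_eqE /= h eqxx.
have ipgg : forall b : 'I_N -> R[i],
    ip (\sum_k b k *: g k) (\sum_k b k *: g k) = qf U (\col_k (b k)^*).
  by move=> b; rewrite (gram_qfb ipA).
have ipww : forall j, ip (w j) (w j) = 1.
  by move=> j; rewrite -(hnorm2C ipA) wn expr1n.
have lam1 : lam <= 1.
  pose k0 : 'I_N := Ordinal N1.
  pose b0 := fun k : 'I_N => ((k == k0)%:R : R[i]).
  have y0 : \sum_k b0 k *: g k = g k0.
    rewrite (bigD1 k0) //= /b0 eqxx scale1r big1 ?addr0 // => k kk0.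
    by rewrite (negbTE kk0) scale0r.
  have n0 : nc (\col_k (b0 k)^* : 'cV[R[i]]_N) = 1.
    rewrite (nc_col (R := R)) (bigD1 k0) //= /b0 eqxx conjC1 mulr1 big1 ?addr0 // => k kk0.
    by rewrite (negbTE kk0) mul0r.
  have [h1 _] := B1 (\col_k (b0 k)^*).
  rewrite n0 mulr1 -ipgg y0 in h1.
  have h2 : ip (g k0) (g k0) <= 1.
    rewrite -(ipww k0) (pyth ipA hP (w k0)) lerDl; exact: ip_ge0.
  by rewrite -lecR rmorph1 (le_trans h1 h2).
have M1 : 1 <= M by rewrite le_max lexx orbT.
have MLam : Lam <= M by rewrite le_max lexx.
have ygv : forall (b : 'I_N -> R[i]) j, (N <= j)%N -> ip (\sum_k b k *: g k) (v j) = 0.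
  move=> b j Nj; rewrite (ip_suml ipA) big1 // => k _.
  by rewrite (ipZl ipA) span_ortho ?mulr0 //; apply: pS.
have realB1 : forall b : 'I_N -> R[i],
    lam * (\sum_k normc (b k) ^+ 2) <= hnorm ip (\sum_k b k *: g k) ^+ 2 /\
    hnorm ip (\sum_k b k *: g k) ^+ 2 <= Lam * (\sum_k normc (b k) ^+ 2).
  move=> b; have [h1 h2] := B1 (\col_k (b k)^*).
  rewrite -ipgg -(hnorm2C ipA) (nc_col (R := R)) -sum_normc2C -!rmorphM !lecR in h1 h2.
  by split.
have synth : forall n (a : nat -> R[i]),
    lam * (\sum_(j < n) normc (a j) ^+ 2) <= hnorm ip (\sum_(j < n) a j *: Bt j) ^+ 2 /\
    hnorm ip (\sum_(j < n) a j *: Bt j) ^+ 2 <= M * (\sum_(j < n) normc (a j) ^+ 2).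
  move=> n a.
  pose b := fun i : 'I_N => if (i < n)%N then a i else 0.
  pose e := fun j : nat => if (j < N)%N then 0 else a j.
  have sE : \sum_(j < n) a j *: Bt j = \sum_k b k *: g k + \sum_(j < n) e j *: v j.
    transitivity (\sum_(j < n) (if (j < N)%N then a j *: p (w j) else 0) +
                  \sum_(j < n) e j *: v j).
      rewrite -big_split; apply: eq_bigr => j _; rewrite /Bt /e.
      by case: ifP => _ /=; rewrite ?scale0r ?addr0 ?add0r.
    congr (_ + _); rewrite (trunc_sum (fun j => a j *: p (w j))).
    by apply: eq_bigr => k _; rewrite /b /g; case: ifP; rewrite ?scale0r.
  have cross : ip (\sum_k b k *: g k) (\sum_(j < n) e j *: v j) = 0.
    rewrite (ip_sumr ipA) big1 // => j _; rewrite (ipZr ipA) /e.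
    case: ifPn => jN; first by rewrite conjC0 mul0r.
    by rewrite ygv ?mulr0 // leqNgt.
  have cross2 : ip (\sum_(j < n) e j *: v j) (\sum_k b k *: g k) = 0.
    by rewrite (ipC ipA) cross conjC0.
  have coefE : \sum_(j < n) normc (a j) ^+ 2 =
      \sum_k normc (b k) ^+ 2 + \sum_(j < n) normc (e j) ^+ 2.
    transitivity (\sum_(j < n) ((if (j < N)%N then normc (a j) ^+ 2 else 0) + normc (e j) ^+ 2)).
      apply: eq_bigr => j _; rewrite /e.
      by case: ifP => _; rewrite ?ComplexField.Normc.normc0 ?expr0n ?addr0 ?add0r.
    rewrite big_split /=; congr (_ + _).
    rewrite (trunc_sum (fun j => normc (a j) ^+ 2)).
    by apply: eq_bigr => k _; rewrite /b; case: ifP; rewrite ?ComplexField.Normc.normc0 ?expr0n.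
  have hsE : hnorm ip (\sum_(j < n) a j *: Bt j) ^+ 2 =
      hnorm ip (\sum_k b k *: g k) ^+ 2 + \sum_(j < n) normc (e j) ^+ 2.
    apply: (@complexI R); rewrite rmorphD /= !(hnorm2C ipA) sum_normc2C sE.
    rewrite (ipDl ipA) !(ipDr ipA) cross cross2 (ip_sum_sum ipA vON).
    by rewrite add0r addr0.
  have [h1 h2] := realB1 b.
  have nb0 : 0 <= \sum_k normc (b k) ^+ 2 by apply: sumr_ge0 => k _; apply: sqr_ge0.
  have ne0 : 0 <= \sum_(j < n) normc (e j) ^+ 2 by apply: sumr_ge0 => k _; apply: sqr_ge0.
  rewrite hsE coefE; split; nra.
have frame : forall f,
    ((lam * hnorm ip f ^+ 2)%:E <=
       \sum_(0 <= j <oo) ((normc (ip f (Bt j)) ^+ 2)%:E))%E /\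
    (\sum_(0 <= j <oo) ((normc (ip f (Bt j)) ^+ 2)%:E) <= (M * hnorm ip f ^+ 2)%:E)%E.
  move=> f.
  have [b yE] := spanH (p f) (pS f).
  have fE : f = p f + (f - p f) by rewrite addrC subrK.
  have tE : forall j, normc (ip f (Bt j)) ^+ 2 =
      (if (j < N)%N then normc (ip (p f) (p (w j))) ^+ 2 else 0) + normc (ip (f - p f) (v j)) ^+ 2.
    move=> j; rewrite /Bt; case: ifPn => jN.
      rewrite (pO f (v j) (vS j jN)) ComplexField.Normc.normc0 expr0n addr0.
      by rewrite {1}fE (ipDl ipA) (pO f _ (pS _)) addr0.
    by rewrite add0r {1}fE (ipDl ipA) span_ortho ?add0r // leqNgt.
  set A := \sum_(i < N) normc (ip (p f) (g i)) ^+ 2.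
  set hh := hnorm ip (f - p f) ^+ 2.
  have psum : forall n, \sum_(0 <= j < n) normc (ip f (Bt j)) ^+ 2 =
      \sum_(j < n) (if (j < N)%N then normc (ip (p f) (p (w j))) ^+ 2 else 0) +
      \sum_(j < n) normc (ip (f - p f) (v j)) ^+ 2.
    by move=> n; rewrite big_mkord -big_split; apply: eq_bigr => j _; rewrite tE.
  have alpha_le : forall n,
      \sum_(j < n) (if (j < N)%N then normc (ip (p f) (p (w j))) ^+ 2 else 0) <= A.
    move=> n; rewrite (trunc_sum (fun j => normc (ip (p f) (p (w j))) ^+ 2)).
    by apply: ler_sum => i _; case: ifP => _ //; apply: sqr_ge0.
  have alpha_eq : forall n, (N <= n)%N ->
      \sum_(j < n) (if (j < N)%N then normc (ip (p f) (p (w j))) ^+ 2 else 0) = A.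
    move=> n Nn; rewrite (trunc_sum (fun j => normc (ip (p f) (p (w j))) ^+ 2)).
    by apply: eq_bigr => i _; rewrite (leq_trans (ltn_ord i) Nn).
  have serE : (\sum_(0 <= j <oo) ((normc (ip f (Bt j)) ^+ 2)%:E) = (A + hh)%:E)%E.
    apply: series_bounds => [j|n|e e0]; first exact: sqr_ge0.
      by rewrite psum; apply: lerD; [apply: alpha_le | apply: bessel].
    have [m hm] := parseval_approx ipA vON (vtot (f - p f)) e0.
    exists (m + N)%N; rewrite psum alpha_eq ?leq_addl //.
    have : \sum_(j < m) normc (ip (f - p f) (v j)) ^+ 2 <=
           \sum_(j < m + N) normc (ip (f - p f) (v j)) ^+ 2.
      rewrite (@big_ord_widen _ _ _ m (m + N) (fun j => normc (ip (f - p f) (v j)) ^+ 2)) ?leq_addr //.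
      rewrite big_mkcond /=; apply: ler_sum => j _; case: ifP => _ //; apply: sqr_ge0.
    rewrite /hh in hm *; move=> hmono; exact: fin3 hm hmono.
  rewrite serE !lee_fin.
  have [h1 h2] := B2 (\col_k (b k)^*).
  rewrite (gram_nc ipA) -ipgg -yE -(hnorm2C ipA) -sum_normc2C -!rmorphM !lecR in h1 h2.
  have fy := hnorm_pyth ipA hP f.
  have hh0 : 0 <= hh by apply: sqr_ge0.
  have yy0 : 0 <= hnorm ip (p f) ^+ 2 by apply: sqr_ge0.
  rewrite fy -/hh; split; first exact: fin1 lam1 hh0 h1.
  exact: fin2 M1 MLam yy0 hh0 h2.
have RC : riesz_constants ip Bt lam M.
  split => //; first exact: le_trans lamLam MLam.
pose k0 : 'I_N := Ordinal N1.
have coefc : forall c : 'cV[R[i]]_N,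
    \sum_(j < N) (c (insubd k0 j) 0)^* *: Bt j = \sum_k (c k 0)^* *: g k /\
    ((\sum_(j < N) normc ((c (insubd k0 j) 0)^*) ^+ 2)%:C)%C = nc c.
  move=> c; split.
    by apply: eq_bigr => j _; rewrite /Bt ltn_ord valKd.
  rewrite sum_normc2C nc_sum; apply: eq_bigr => j _.
  by rewrite valKd conjCK mulrC.
have ipY : forall c : 'cV[R[i]]_N,
    ((hnorm ip (\sum_k (c k 0)^* *: g k) ^+ 2)%:C)%C = qf U c.
  by move=> c; rewrite (hnorm2C ipA) (gram_qf ipA).
split; first by exists lam, M.
exists M, lam; split.
- split => // A' B' [A0 AB fr sy]; split.
    have [cs cn] := coefc c1; have [h _] := sy N (fun j => (c1 (insubd k0 j) 0)^*).
    have e1 : \sum_(j < N) normc ((c1 (insubd k0 j) 0)^*) ^+ 2 = 1.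
      by apply: (@complexI R); rewrite cn c1n.
    have e2 : hnorm ip (\sum_(j < N) (c1 (insubd k0 j) 0)^* *: Bt j) ^+ 2 = lam.
      by apply: (@complexI R); rewrite cs ipY c1q.
    by rewrite e1 e2 mulr1 in h.
  have B'1 : 1 <= B'.
    have [_ h] := sy N.+1 (fun j => ((j == N)%:R : R[i])).
    rewrite big_ord_recr big1 /= ?add0r in h; last first.
      by move=> j _; rewrite (ltn_eqF (ltn_ord j)) scale0r.
    rewrite big_ord_recr big1 /= ?add0r in h; last first.
      by move=> j _; rewrite (ltn_eqF (ltn_ord j)) ComplexField.Normc.normc0 expr0n.
    rewrite eqxx ComplexField.Normc.normc1 expr1n mulr1 scale1r /Bt ltnn in h.
    suff <- : hnorm ip (v N) ^+ 2 = 1 by [].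
    by apply: (@complexI R); rewrite (hnorm2C ipA) vON eqxx.
  have LB' : Lam <= B'.
    have [cs cn] := coefc c2; have [_ h] := sy N (fun j => (c2 (insubd k0 j) 0)^*).
    have e1 : \sum_(j < N) normc ((c2 (insubd k0 j) 0)^*) ^+ 2 = 1.
      by apply: (@complexI R); rewrite cn c2n.
    have e2 : hnorm ip (\sum_(j < N) (c2 (insubd k0 j) 0)^* *: Bt j) ^+ 2 = Lam.
      by apply: (@complexI R); rewrite cs ipY c2q.
    by rewrite e1 e2 mulr1 in h.
  by rewrite ge_max LB' B'1.
- have bfun : forall c, Bfun U c =
      ((hnorm ip (\sum_k (c k 0)^* *: g k) ^+ 2 + 1 - cvnorm c ^+ 2)%:C)%C.
    by move=> c; rewrite /Bfun mx_formE rmorphB rmorphD /= ipY rmorph1.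
  have bnd : forall c, lam * cvnorm c ^+ 2 <= hnorm ip (\sum_k (c k 0)^* *: g k) ^+ 2 /\
      hnorm ip (\sum_k (c k 0)^* *: g k) ^+ 2 <= Lam * cvnorm c ^+ 2.
    move=> c; have [h1 h2] := B1 c.
    by rewrite -cvnormE -ipY -!rmorphM !lecR in h1 h2.
  have cv0 : forall c : 'cV[R[i]]_N, 0 <= cvnorm c by move=> c; apply: sqrtr_ge0.
  have cvle : forall c : 'cV[R[i]]_N, cvnorm c <= 1 -> cvnorm c ^+ 2 <= 1.
    by move=> c h; apply: exprn_ile1.
  have cv1 : forall c : 'cV[R[i]]_N, nc c = 1 -> cvnorm c = 1.
    move=> c h; apply/eqP; rewrite -sqrp_eq1 //; apply/eqP.
    by apply: (@complexI R); rewrite cvnormE h.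
  split; last first.
    move=> c /cvle c1'; rewrite bfun lecR; have [_ h] := bnd c.
    exact: fin4 h (sqr_ge0 _) c1' MLam M1.
  case: (leP Lam 1) => hL.
    have M1' : M = 1 by apply: le_anti; rewrite M1 ge_max hL lexx.
    exists 0.
      rewrite /cvnorm big1 ?sqrtr0 // => i _; rewrite mxE.
      by rewrite ComplexField.Normc.normc0 expr0n.
    rewrite bfun M1'; congr ((_)%:C)%C.
    have -> : \sum_k ((0 : 'cV[R[i]]_N) k 0)^* *: g k = 0.
      by rewrite big1 // => k _; rewrite mxE conjC0 scale0r.
    rewrite /cvnorm big1 ?sqrtr0; last by move=> i _; rewrite mxE ComplexField.Normc.normc0 expr0n.
    by rewrite (hnorm2 ipA) (ip0l ipA) /= expr0n /= add0r subr0.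
  have ML : M = Lam by apply: le_anti; rewrite MLam ge_max lexx (ltW hL).
  exists c2; first by rewrite (cv1 _ c2n).
  rewrite bfun ML (cv1 _ c2n); congr ((_)%:C)%C.
  apply: (@complexI R); rewrite rmorphB rmorphD /= ipY c2q.
  by rewrite expr1n addrK.
- have bfun : forall c, Bfun U c =
      ((hnorm ip (\sum_k (c k 0)^* *: g k) ^+ 2 + 1 - cvnorm c ^+ 2)%:C)%C.
    by move=> c; rewrite /Bfun mx_formE rmorphB rmorphD /= ipY rmorph1.
  have cv1 : forall c : 'cV[R[i]]_N, nc c = 1 -> cvnorm c = 1.
    move=> c h; apply/eqP; rewrite -sqrp_eq1; last by apply: sqrtr_ge0.
    by apply/eqP; apply: (@complexI R); rewrite cvnormE h.
  split.
    exists c1; first by rewrite (cv1 _ c1n).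
    rewrite bfun (cv1 _ c1n); congr ((_)%:C)%C.
    apply: (@complexI R); rewrite rmorphB rmorphD /= ipY c1q.
    by rewrite expr1n addrK.
  move=> c ch; rewrite bfun lecR; have [h1 _] := B1 c.
  rewrite -cvnormE -ipY -!rmorphM !lecR in h1.
  apply: fin5 h1 (sqr_ge0 _) _ lam1.
  by apply: exprn_ile1 => //; apply: sqrtr_ge0.
- move=> Lam' lam' [eL' hL'] [el' hl'].
  have [_ a1] := eigB _ eL'; have a2 := hL' _ eigL.
  have [a3 _] := eigB _ el'; have a4 := hl' _ eigl.
  rewrite !lecR in a1 a2 a3 a4.
  have -> : Lam' = Lam by apply: le_anti; rewrite a1 a2.
  have -> : lam' = lam by apply: le_anti; rewrite a3 a4.
  by [].
Qed.
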